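(* Let $\mu\in (-1,1)$ and $$\tilde{M} = \begin{pmatrix} 1 & i\mu \\ -i\mu & 1 \end{pmatrix}.$$ Then for every $k\in \mathbb{N}$, $\lambda_{\min}\big(\mathrm{Re}(\tilde{M}^{\otimes k})\big) \ge (1-\mu^2)^{k/2}$.
   Context: $\tilde M^{\otimes k}$ is the $k$-fold Kronecker (tensor) power, $\mathrm{Re}(\cdot)$ denotes the entrywise real part of a complex matrix (which here is a real symmetric matrix), and $\lambda_{\min}$ denotes the smallest eigenvalue. *)

(* Defs.v *)
From HB Require Import structures.
From mathcomp Require Import all_boot all_order all_algebra.
From mathcomp Require Import polyrcf complex mxtens.
Set Implicit Arguments. Unset Strict Implicit. Unset Printing Implicit Defensive.
Import Order.TTheory GRing.Theory Num.Theory.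
Local Open Scope ring_scope.

Definition Mtilde (R : rcfType) (mu : R) : 'M[R[i]]_2 :=
  \matrix_(a < 2, b < 2)
    (if a == b then 1
     else if (a == 0 :> 'I_2) then ('i * mu%:C)%C else (- ('i * mu%:C))%C).

Fixpoint kron_pow (R : pzRingType) (M : 'M[R]_2) (k : nat) : 'M[R]_(2 ^ k) :=
  match k return 'M[R]_(2 ^ k) with
  | 0 => 1%:M
  | k'.+1 => castmx (esym (expnS 2 k'), esym (expnS 2 k')) (M *t kron_pow M k')
  end.

Definition Re_mx (R : rcfType) (m n : nat) (A : 'M[R[i]]_(m, n)) : 'M[R]_(m, n) :=
  map_mx (@complex.Re R) A.

(* Smallest eigenvalue: the least real root of the characteristic polynomial
   (rootsR lists all real roots in increasing order). *)
Definition lambda_min (R : rcfType) (n : nat) (A : 'M[R]_n) : R :=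
  head 0 (rootsR (char_poly A)).

(* Main.v *)
Require Import Defs.
From HB Require Import structures.
From mathcomp Require Import all_boot all_order all_algebra.
From mathcomp Require Import polyrcf complex mxtens.
From mathcomp Require spectral.
From mathcomp Require Import ring lra.
Set Implicit Arguments. Unset Strict Implicit. Unset Printing Implicit Defensive.
Import Order.TTheory GRing.Theory Num.Theory.
Local Open Scope ring_scope.

Section Gen.
Variable R : comPzRingType.

Lemma castmx_mulsq n n' (e : n = n') (X Y : 'M[R]_n) :
  castmx (e, e) X *m castmx (e, e) Y = castmx (e, e) (X *m Y).
Proof. by case: n' / e; rewrite !castmx_id. Qed.

Lemma tens_scalar2 m n (a b : R) :
  (a%:M : 'M[R]_m) *t (b%:M : 'M[R]_n) = (a * b)%:M.
Proof.
apply/matrixP=> i j.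
case: (mxtens_indexP i)=> i0 i1; case: (mxtens_indexP j)=> j0 j1.
rewrite tensmxE !mxE (inj_eq (can_inj (@mxtens_indexK _ _))) xpair_eqE.
by case: (i0 == j0); case: (i1 == j1); rewrite /= ?mulr1n ?mulr0n ?mulr0 ?mul0r.
Qed.

Lemma kron_mul (M N : 'M[R]_2) k :
  kron_pow M k *m kron_pow N k = kron_pow (M *m N) k.
Proof.
elim: k => [|k IH] /=; first by rewrite mul1mx.
by rewrite castmx_mulsq tensmx_mul IH.
Qed.

Lemma kron_scalar (a : R) k : kron_pow (a%:M) k = (a ^+ k)%:M.
Proof.
elim: k => [|k IH] /=; first by rewrite expr0.
rewrite IH tens_scalar2 -exprS.
apply/matrixP=> i j; rewrite castmxE !mxE; congr (_ *+ _).
Qed.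

End Gen.

Lemma map_castsq (aR rR : Type) (f : aR -> rR) n n' (e : n = n') (X : 'M[aR]_n) :
  map_mx f (castmx (e, e) X) = castmx (e, e) (map_mx f X).
Proof. by case: n' / e; rewrite !castmx_id. Qed.

Lemma tr_castsq (aR : Type) n n' (e : n = n') (X : 'M[aR]_n) :
  (castmx (e, e) X)^T = castmx (e, e) X^T.
Proof. by case: n' / e; rewrite !castmx_id. Qed.

Lemma map_kron (aR rR : comPzRingType) (f : {rmorphism aR -> rR}) (M : 'M[aR]_2) k :
  map_mx f (kron_pow M k) = kron_pow (map_mx f M) k.
Proof.
elim: k => [|k IH] /=; first by rewrite map_scalar_mx rmorph1.
by rewrite map_castsq map_mxT IH.
Qed.

Lemma tr_kron (aR : comPzRingType) (M : 'M[aR]_2) k :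
  (kron_pow M k)^T = kron_pow M^T k.
Proof.
elim: k => [|k IH] /=; first by rewrite tr_scalar_mx.
by rewrite tr_castsq trmx_tens IH.
Qed.

Section Main.
Variable R : rcfType.
Local Notation C := R[i].

Definition adj m n (X : 'M[C]_(m,n)) : 'M[C]_(n,m) := map_mx (@conjc R) X^T.

Lemma adjM m n p (X : 'M[C]_(m,n)) (Y : 'M[C]_(n,p)) : adj (X *m Y) = adj Y *m adj X.
Proof. by rewrite /adj trmx_mul map_mxM. Qed.

Lemma adjK m n (X : 'M[C]_(m,n)) : adj (adj X) = X.
Proof. by apply/matrixP=> i j; rewrite !mxE conjcK. Qed.

Lemma adj_kron (M : 'M[C]_2) k : adj (kron_pow M k) = kron_pow (adj M) k.
Proof. by rewrite /adj tr_kron map_kron. Qed.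

Variable mu : R.
Hypothesis hmu : -1 < mu < 1.
Let s := Num.sqrt (1 - mu ^+ 2).
Let Mt := Mtilde mu.
Let Mb := map_mx (@conjc R) Mt.
Let L : 'M[C]_2 := \matrix_(a < 2, b < 2)
  (if a == 0 then (if b == 0 then 1 else - ('i * mu%:C)%C) else (if b == 0 then 0 else s%:C%C)).

Lemma s2 : s ^+ 2 = 1 - mu ^+ 2.
Proof.
case/andP: hmu => h1 h2; rewrite sqr_sqrtr //; nra.
Qed.

Ltac cx := apply/eqP; rewrite eq_complex /=; apply/andP; split; apply/eqP.

Lemma adjMt : adj Mt = Mt.
Proof. by apply/matrixP => i j; case: i => [[|[|//]] Hi]; case: j => [[|[|//]] Hj]; rewrite !mxE /=; cx; ring. Qed.

Lemma MtMb : Mt *m Mb = ((1 - mu ^+ 2)%:C)%C%:M.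
Proof. by apply/matrixP => i j; case: i => [[|[|//]] Hi]; case: j => [[|[|//]] Hj]; rewrite !mxE !big_ord_recl big_ord0 !mxE /=; cx; ring. Qed.

Lemma MbMt : Mb *m Mt = ((1 - mu ^+ 2)%:C)%C%:M.
Proof. by apply/matrixP => i j; case: i => [[|[|//]] Hi]; case: j => [[|[|//]] Hj]; rewrite !mxE !big_ord_recl big_ord0 !mxE /=; cx; ring. Qed.

Lemma MbL : adj L *m L = Mb.
Proof. have h := s2. by apply/matrixP => i j; case: i => [[|[|//]] Hi]; case: j => [[|[|//]] Hj]; rewrite !mxE !big_ord_recl big_ord0 !mxE /=; cx; nra. Qed.


Variable k : nat.
Let H := kron_pow Mt k.
Let Hb := kron_pow Mb k.
Let K := kron_pow L k.
Let c := s ^+ k.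
Let cc := (c%:C)%C.

Lemma adjH : adj H = H.
Proof. by rewrite /H adj_kron adjMt. Qed.

Lemma HbE : map_mx (@conjc R) H = Hb.
Proof. by rewrite /H map_kron. Qed.

Lemma ddE : (((1 - mu ^+ 2) ^+ k)%:C)%C = cc ^+ 2.
Proof. by rewrite /cc /c -rmorphXn -exprM mulnC exprM s2. Qed.

Lemma HHb : H *m Hb = (cc ^+ 2)%:M.
Proof. rewrite /H /Hb kron_mul MtMb kron_scalar -ddE. by rewrite (rmorphXn (real_complex R)). Qed.

Lemma HbH : Hb *m H = (cc ^+ 2)%:M.
Proof. by rewrite /H /Hb kron_mul MbMt kron_scalar -ddE (rmorphXn (real_complex R)). Qed.

Lemma HbK : Hb = adj K *m K.
Proof. by rewrite /K adj_kron kron_mul MbL. Qed.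

Lemma keyP : (H - cc%:M) *m Hb *m (H - cc%:M)
   = cc ^+ 2 *: (H + Hb) - (2%:R * cc ^+ 3)%:M.
Proof.
rewrite mulmxBl HHb mul_scalar_mx mulmxBr !mulmxBl mul_mx_scalar -scalemxAl HbH.
rewrite !mul_scalar_mx !mul_mx_scalar.
apply/matrixP=> i j; rewrite !mxE; case: (i == j); rewrite ?mulr1n ?mulr0n; ring.
Qed.

Lemma adjB n (X Y : 'M[C]_n) : adj (X - Y) = adj X - adj Y.
Proof. by apply/matrixP=> i j; rewrite !mxE rmorphB. Qed.

Lemma adj_scalar n (a : R) : adj ((a%:C)%C%:M : 'M[C]_n) = (a%:C)%C%:M.
Proof. by rewrite /adj tr_scalar_mx map_scalar_mx /= oppr0. Qed.

Lemma keyW : (H - cc%:M) *m Hb *m (H - cc%:M) = adj (K *m (H - cc%:M)) *m (K *m (H - cc%:M)).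
Proof. by rewrite adjM adjB adjH adj_scalar HbK !mulmxA. Qed.


Let A := Re_mx H.
Let AC := map_mx (real_complex R) A.

Lemma ACE : H + Hb = 2%:R *: AC.
Proof.
rewrite -HbE; apply/matrixP=> i j; rewrite !mxE addcJ; by [].
Qed.

Lemma AT : A^T = A.
Proof.
apply/matrixP=> i j; have e : (adj H) j i = H j i by rewrite adjH.
rewrite /= !mxE in e; rewrite !mxE -e; by case: (H i j).
Qed.

Lemma uadj_ge0 m (u : 'rV[C]_m) : 0 <= (u *m adj u) 0 0.
Proof. rewrite mxE; apply: sumr_ge0 => j _; rewrite !mxE; exact: mulcJ_ge0. Qed.

Lemma eig_bound (v : 'rV[R]_(2 ^ k)) (l : R) : v *m A = l *: v -> v != 0 -> c <= l.
Proof.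
move=> hvA vn0.
pose vc := map_mx (real_complex R) v.
have hv : vc *m AC = (l%:C)%C *: vc by rewrite -map_mxM hvA map_mxZ.
pose W := K *m (H - cc%:M).
have h0 := uadj_ge0 (vc *m adj W).
have e : (vc *m adj W *m adj (vc *m adj W)) = vc *m ((H - cc%:M) *m Hb *m (H - cc%:M)) *m adj vc.
  by rewrite keyW adjM adjK !mulmxA.
rewrite e keyP ACE scalerA mulmxBr -scalemxAr hv mul_mx_scalar scalerA -scalerBl in h0.
rewrite -scalemxAl mxE in h0.
have eS : (vc *m adj vc) 0 0 = ((\sum_j v 0 j ^+ 2)%:C)%C.
  rewrite mxE (rmorph_sum (real_complex R)); apply: eq_bigr => j _.
  by rewrite !mxE conjc_real -(rmorphM (real_complex R)) expr2.
rewrite eS in h0.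
set S := \sum_j _ in h0.
have eY : (((c ^+ 2 * 2 * l - 2 * c ^+ 3) * S)%:C)%C
   = (cc ^+ 2 * 2 * l%:C%C - 2 * cc ^+ 3) * S%:C%C.
  rewrite /cc (rmorphM (real_complex R)) (rmorphB (real_complex R)).
  rewrite !(rmorphM (real_complex R)) !(rmorphXn (real_complex R)).
  by rewrite (rmorph_nat (real_complex R)).
rewrite -eY ler0c in h0.
have cpos : 0 < c by rewrite exprn_gt0 // sqrtr_gt0; case/andP: hmu => h1 h2; nra.
have Spos : 0 < S.
  rewrite lt_def sumr_ge0 ?andbT; last by move=> j _; exact: sqr_ge0.
  apply: contra vn0 => /eqP /(psumr_eq0P (fun j _ => sqr_ge0 _)) h.
  by apply/eqP/rowP => j; rewrite mxE; apply/eqP; rewrite -sqrf_eq0 h.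
have e2 : (c ^+ 2 * 2 * l - 2 * c ^+ 3) * S = (2 * c ^+ 2 * S) * (l - c) by ring.
rewrite e2 pmulr_rge0 ?subr_ge0 in h0 => //.
by rewrite !mulr_gt0 // exprn_gt0.
Qed.

End Main.

Lemma sym_root (R : rcfType) n (A : 'M[R]_n) :
  (0 < n)%N -> A^T = A -> exists x, root (char_poly A) x.
Proof.
move=> n0 hA.
pose AC := map_mx (real_complex R) A.
have [a] := spectral.eigenvalue_closed AC n0.
move/eigenvalueP => [w hw wn0].
have adjAC : adj AC = AC.
  by apply/matrixP=> i j; rewrite !mxE conjc_real -[in RHS]hA !mxE.
pose N := (w *m adj w) 0 0.
have N0 : N != 0.
  apply: contra wn0; rewrite /N mxE => /eqP.
  have hge : forall j : 'I_n, true -> 0 <= w 0 j * (adj w) j 0.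
    by move=> j _; rewrite !mxE; exact: mulcJ_ge0.
  move/(psumr_eq0P hge) => h.
  apply/eqP/rowP => j; rewrite mxE; have := h j isT; rewrite !mxE.
  by move/eqP; rewrite mulf_eq0 conjc_eq0 orbb => /eqP.
have hz : (w *m AC *m adj w) 0 0 = a * N by rewrite hw -scalemxAl mxE.
have hzc : conjc ((w *m AC *m adj w) 0 0) = (w *m AC *m adj w) 0 0.
  have e : adj (w *m AC *m adj w) = w *m AC *m adj w by rewrite !adjM adjK adjAC mulmxA.
  by have := congr1 (fun M : 'M[R[i]]_1 => M 0 0) e; rewrite !mxE.
have hNc : conjc N = N.
  have e : adj (w *m adj w) = w *m adj w by rewrite !adjM adjK.
  by have := congr1 (fun M : 'M[R[i]]_1 => M 0 0) e; rewrite /N !mxE.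
rewrite hz in hzc; rewrite rmorphM in hzc.
have ha : conjc a = a by apply: (mulIf N0); rewrite -[in LHS]hNc; exact: hzc.
clear hz hzc; case: a ha hw => x y /= ha hw.
case: ha => hy; have y0 : y = 0 by lra.
subst y.
exists x; rewrite -(fmorph_root (real_complex R)) (map_char_poly (real_complex R)).
by rewrite -eigenvalue_root_char; apply/eigenvalueP; exists w.
Qed.

Theorem mainTheorem6 (R : rcfType) (mu : R) (hmu : -1 < mu < 1) (k : nat) :
  lambda_min (Re_mx (kron_pow (Mtilde mu) k)) >= (Num.sqrt (1 - mu ^+ 2)) ^+ k.
Proof.
set A := Re_mx _.
have p0 : char_poly A != 0 := monic_neq0 (char_poly_monic A).
have [x rx] := sym_root (expn_gt0 2 k) (AT mu k).
rewrite /lambda_min.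
have : x \in rootsR (char_poly A) by rewrite -(roots_on_rootsR p0) rx andbT.
case E: (rootsR _) => [|y ys] //= _.
have : y \in rootsR (char_poly A) by rewrite E mem_head.
rewrite -(roots_on_rootsR p0) => /andP [_ ry].
move: ry; rewrite -eigenvalue_root_char => /eigenvalueP [v hv vn0].
exact: (eig_bound hmu hv vn0).
Qed.
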